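(* Assume $\delta d_0>2$, let $t=d_0/2$, $\varepsilon_0=\frac{d_0}{2}-\frac1\delta$, and $\gamma=\left(1+\frac ct\right)^{-1}\frac{\delta d_0-1}{d_0-1}\alpha$. Let $G=(L\cup R,E)$ be a $(c,d,\alpha,\delta)$-bipartite expander with $L=[n]$, $C_0\subseteq\mathbb{F}_2^d$ a linear code of minimum distance $d_0$, $x\in\mathbb{F}_2^n$ and $y\in T(G,C_0)$ with $d_H(x,y)\le\gamma n$. Then $\mathsf{DeepFlip}(x)$ outputs an element $x'\in\mathbb{F}_2^n$, in $O(|F(x,y)|)$ time, such that $|F(x',y)|\le\frac12|F(x,y)|$.
   Context: Binary linear codes, Hamming distance $d_H$. A bipartite graph $G=(L\cup R,E)$ is $(c,d)$-regular if left degrees are $c$ and right degrees $d$; $N(S)$ is the neighborhood of $S$. A $(c,d,\alpha,\delta)$-bipartite expander ($c,d$ positive integers, $\alpha,\delta\in(0,1]$, all constants) is a $(c,d)$-regular bipartite graph with $|N(S)|\ge\delta c|S|$ for every $S\subseteq L$, $|S|\le\alpha|L|$. Tanner code: $L=[n]$, for each $v\in R$ a fixed ordering of $N(v)$ defines $x_{N(v)}\in\mathbb{F}_2^d$, and $T(G,C_0)=\{x: x_{N(v)}\in C_0\ \forall v\in R\}$. $F(x,y)=\{i\in[n]:x_i\ne y_i\}$; $U(x)=\{v\in R: x_{N(v)}\notin C_0\}$. $\mathsf{Decode}(z)$ for $z\in\mathbb{F}_2^d$ is the codeword of $C_0$ closest to $z$, ties broken lexicographically. $W=\{\frac{i}{cd_0}: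 i\in\mathbb{Z},0\le i\le cd_0\}$. $\mathsf{DeterFlip}(x,q)$ for $q\in\mathbb{R}$: set $p_1=\dots=p_n=0$; for each $v\in R$, let $w_v=\mathsf{Decode}(x_{N(v)})$; if $1\le d_H(w_v,x_{N(v)})<t$, let $i$ be the smallest element of $N(v)$ where $w_v$ and $x_{N(v)}$ differ and increase $p_i$ by $\frac{t-d_H(w_v,x_{N(v)})}{ct}$; then flip every $x_i$ with $p_i=q$ and return the result. $\mathsf{DeepFlip}(x)$: let $\varepsilon=\frac{\varepsilon_0\delta}{2ct^2}$ and $s=\left\lceil\log\left(\frac{\delta d_0-1}{2(d_0-1)}\right)/\log(1-\varepsilon)\right\rceil$; set $k_{\min}=|R|+1$, $x_{\min}=\perp$. For each $(q_1,\dots,q_s)\in(W\setminus\{0\})^s$: set $x^{(0)}=x$ and for $i=1,\dots,s$ set $x^{(i)}=\mathsf{DeterFlip}(x^{(i-1)},q_i)$; if $|U(x^{(i)})|>c\gamma n$ abandon this sequence; otherwise, if $i=s$ and $|U(x^{(s)})|<k_{\min}$, set $k_{\min}=|U(x^{(s)})|$ and $x_{\min}=x^{(s)}$. Return $x_{\min}$. Running time is in the RAM model with adjacency lists, with $U(x)$ and the $p_i$ maintained in data structures (initialized once beforehand) allowing $U(x)$ to be enumerated in $O(|U(x)|)$ time and updated in $O(1)$ time per bit flip; constants may depend on $c,d,\alpha,\delta,C_0$. *)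

(* Defs.v *)
From HB Require Import structures.
From mathcomp Require Import all_boot all_order all_algebra.
From mathcomp Require Import reals exp.
Set Implicit Arguments. Unset Strict Implicit. Unset Printing Implicit Defensive.
Import Order.TTheory GRing.Theory Num.Theory.
Local Open Scope ring_scope.

Notation word n := 'rV['F_2]_n.

Definition Fset (n : nat) (x y : word n) : {set 'I_n} :=
  [set i | x 0 i != y 0 i].

Definition dH (n : nat) (x y : word n) : nat := #|Fset x y|.

Definition linear_code (d : nat) (C0 : {set word d}) : Prop :=
  0 \in C0 /\ (forall u w, u \in C0 -> w \in C0 -> u + w \in C0).

Definition min_distance (d : nat) (C0 : {set word d}) (d0 : nat) : Prop :=
  (exists u, exists w, [/\ u \in C0, w \in C0, u != w & dH u w = d0]) /\
  (forall u w, u \in C0 -> w \in C0 -> u != w -> (d0 <= dH u w)%N).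

(* nbr v is the fixed ordering of N(v) (a d-tuple of left vertices).   *)
Section Graph.
Variables (n d : nat) (Rt : finType) (nbr : Rt -> d.-tuple 'I_n).

Definition Nset (S : {set 'I_n}) : {set Rt} :=
  [set v | [exists i in S, i \in nbr v]].

Definition regular (c : nat) : Prop :=
  (forall v, uniq (nbr v)) /\
  (forall i : 'I_n, #|[set v | i \in nbr v]| = c).

Definition expander {R : realType} (c : nat) (alpha delta : R) : Prop :=
  regular c /\
  (forall S : {set 'I_n}, #|S|%:R <= alpha * n%:R ->
     delta * c%:R * #|S|%:R <= #|Nset S|%:R).

Definition restrict (x : word n) (v : Rt) : word d :=
  \row_(k < d) x 0 (tnth (nbr v) k).

Definition Tanner (C0 : {set word d}) : {set word n} :=
  [set x | [forall v, restrict x v \in C0]].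

Definition Uset (C0 : {set word d}) (x : word n) : {set Rt} :=
  [set v | restrict x v \notin C0].
End Graph.

(* Decoding of the local code: nearest codeword, ties broken           *)
(* lexicographically (coordinate 0 most significant, 0 < 1).  The      *)
(* lexicographic order on F_2^d is encoded by the binary value lexrank *)
(* and the key dH * 2^d + lexrank orders first by distance then lex.   *)
Definition lexrank (d : nat) (w : word d) : nat :=
  \sum_(k < d) ((w ord0 k != 0%R) * 2 ^ (d.-1 - k))%N.

Definition Decode (d : nat) (C0 : {set word d}) (z : word d) : word d :=
  [arg min_(w < 0 in C0) (dH w z * 2 ^ d + lexrank w)%N].

Section Algo.
Variables (R : realType) (c d d0 : nat) (alpha delta : R).
Variables (C0 : {set word d}).
Variables (n : nat) (Rt : finType) (nbr : Rt -> d.-tuple 'I_n).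

Definition tpar : R := d0%:R / 2.
Definition eps0 : R := d0%:R / 2 - delta^-1.
Definition gammapar : R :=
  (1 + c%:R / tpar)^-1 * ((delta * d0%:R - 1) / (d0%:R - 1)) * alpha.
Definition epspar : R := eps0 * delta / (2 * c%:R * tpar ^+ 2).
Definition spar : nat :=
  `|Num.ceil (ln ((delta * d0%:R - 1) / (2 * (d0%:R - 1))) / ln (1 - epspar))|%N.

Definition Wset : seq R := [seq i%:R / (c * d0)%:R | i <- iota 0 (c * d0).+1].
Definition Wnz : seq R := [seq q <- Wset | q != 0].

Fixpoint qseqs (k : nat) : seq (seq R) :=
  if k is k'.+1 then [seq q :: qs | q <- Wnz, qs <- qseqs k'] else [:: [::]].

Definition wv (x : word n) (v : Rt) : word d := Decode C0 (restrict nbr x v).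
Definition kv (x : word n) (v : Rt) : nat := dH (wv x v) (restrict nbr x v).

Definition diffN (x : word n) (v : Rt) : {set 'I_n} :=
  [set tnth (nbr v) k | k in [set k : 'I_d | wv x v 0 k != restrict nbr x v 0 k]].

Definition firstdiff (x : word n) (v : Rt) (i : 'I_n) : bool :=
  (i \in diffN x v) && [forall j in diffN x v, (i <= j)%N].

Definition active (x : word n) (v : Rt) : bool :=
  (1 <= kv x v)%N && ((kv x v)%:R < tpar).

(* final value of p_i *)
Definition pval (x : word n) (i : 'I_n) : R :=
  \sum_(v | active x v && firstdiff x v i) (tpar - (kv x v)%:R) / (c%:R * tpar).

Definition DeterFlip (x : word n) (q : R) : word n :=
  \row_i (if pval x i == q then x 0 i + 1 else x 0 i).

(* running one sequence (q_1,...,q_s) from x; None = abandoned *)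
Fixpoint runseq (x : word n) (qs : seq R) : option (word n) :=
  if qs is q :: qs' then
    let x1 := DeterFlip x q in
    if c%:R * gammapar * n%:R < #|Uset nbr C0 x1|%:R then None
    else runseq x1 qs'
  else Some x.

(* DeepFlip, with the sequences (q_1..q_s) visited in the order [ord]
   (the paper leaves the order unspecified; [ord] must enumerate
   (W\{0})^s, see the theorem).  None = the output \bot. *)
Definition DeepFlip_step (x : word n) (st : nat * option (word n)) (qs : seq R) :=
  match runseq x qs with
  | Some xs => if (#|Uset nbr C0 xs| < st.1)%N then (#|Uset nbr C0 xs|, Some xs)
               else st
  | None => st
  end.

Definition DeepFlip (ord : seq (seq R)) (x : word n) : option (word n) :=
  (foldl (DeepFlip_step x) (#|Rt|.+1, None) ord).2.

(* Cost accounting (RAM model with the data structures of the paper): *)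
(* a call DeterFlip(x,q) costs 1 + |U(x)| (only v in U(x) can have     *)
(* d_H(w_v,x_{N(v)}) >= 1; per-vertex work is O(1) as d, C0 are        *)
(* constants) plus one unit per flipped bit (O(1) update of U and p);  *)
(* each sequence costs one extra unit (bookkeeping of k_min, x_min).   *)
Definition cost_DeterFlip (x : word n) (q : R) : nat :=
  (1 + #|Uset nbr C0 x| + #|Fset x (DeterFlip x q)|)%N.

Fixpoint cost_runseq (x : word n) (qs : seq R) : nat :=
  if qs is q :: qs' then
    let x1 := DeterFlip x q in
    let abandon := (c%:R * gammapar * n%:R < #|Uset nbr C0 x1|%:R :> R) in
    (cost_DeterFlip x q + (if abandon then 0 else cost_runseq x1 qs'))%N
  else 0%N.

Definition cost_DeepFlip (ord : seq (seq R)) (x : word n) : nat :=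
  (\sum_(qs <- ord) (1 + cost_runseq x qs))%N.
End Algo.

(* Main.v *)
Require Import Defs.
From HB Require Import structures.
From mathcomp Require Import all_boot all_order all_algebra.
From mathcomp Require Import reals exp.
From mathcomp Require Import zify ring lra.
Set Implicit Arguments. Unset Strict Implicit. Unset Printing Implicit Defensive.
Import Order.TTheory GRing.Theory Num.Theory.
Local Open Scope ring_scope.

Lemma F2flip (a b : 'F_2) : (a + 1 != b) = (a == b).
Proof. move: a b. by do 2!case=> [[|[|//]] ?]. Qed.

Lemma dH_sym m (u w : word m) : dH u w = dH w u.
Proof. by rewrite /dH /Fset; apply: eq_card => i; rewrite !inE eq_sym. Qed.

Lemma dH_tri m (u v w : word m) : (dH u w <= dH u v + dH v w)%N.
Proof.
rewrite /dH; apply: leq_trans (leq_card_setU _ _); apply: subset_leq_card.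
apply/subsetP => i; rewrite !inE => H; apply/orP.
case: (eqVneq (u 0 i) (v 0 i)) => [E|]; last by left.
by right; rewrite -E.
Qed.

Lemma dH0 m (u : word m) : dH u u = 0%N.
Proof. by rewrite /dH /Fset; apply/eqP; rewrite cards_eq0; apply/eqP/setP=> i; rewrite !inE eqxx. Qed.

Lemma dH0_eq m (u w : word m) : dH u w = 0%N -> u = w.
Proof.
rewrite /dH => /eqP; rewrite cards_eq0 => /eqP E.
apply/rowP => i; apply/eqP; apply/negPn/negP => H.
have : i \in Fset u w by rewrite inE.
by rewrite E inE.
Qed.

Lemma lexrank_lt m (w : word m) : (lexrank w < 2 ^ m)%N.
Proof.
rewrite /lexrank.
have H : (\sum_(k < m) ((w ord0 k != 0%R) * 2 ^ (m.-1 - k)) <= \sum_(k < m) 2 ^ (m.-1 - k))%N.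
  by apply: leq_sum => k _; case: (_ != _); rewrite ?mul1n ?mul0n.
apply: leq_ltn_trans H _.
elim: m {w} => [|m IH]; first by rewrite big_ord0.
rewrite big_ord_recr /= subnn expn0.
have -> : (\sum_(i < m) 2 ^ (m - widen_ord (leqnSn m) i) = (\sum_(i < m) 2 ^ (m.-1 - i)) * 2)%N.
  rewrite big_distrl /=; apply: eq_bigr => i _.
  rewrite -expnSr; congr (2 ^ _)%N; case: i => i /= Hi; rewrite -subSn //; by case: m Hi {IH}.
rewrite expnS; move: IH; move: (\sum_(i < m) _)%N (2 ^ m)%N => a b; lia.
Qed.

Section Dec.
Variables (d d0 : nat) (C0 : {set word d}).
Hypothesis H0 : 0 \in C0.

Lemma Decode_in z : Decode C0 z \in C0.
Proof. by rewrite /Decode; case: arg_minnP. Qed.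

Lemma Decode_min z w : w \in C0 -> (dH (Decode C0 z) z <= dH w z)%N.
Proof.
rewrite /Decode; case: arg_minnP => // u _ Hm /Hm Hw.
have Hl := lexrank_lt w.
have : (dH u z * 2 ^ d < (dH w z).+1 * 2 ^ d)%N.
  apply: leq_ltn_trans (leq_addr (lexrank u) _) _; apply: leq_ltn_trans Hw _.
  by rewrite mulSnr ltn_add2l.
by rewrite ltn_mul2r ltnS => /andP[].
Qed.

Hypothesis Hmd : min_distance C0 d0.

Lemma Decode_uniq z w : w \in C0 -> (2 * dH w z < d0)%N -> Decode C0 z = w.
Proof.
move=> Hw Hlt; apply/eqP/negPn/negP => Hne.
have H1 := Decode_min z Hw.
have H2 := Hmd.2 _ _ (Decode_in z) Hw Hne.
have H3 := dH_tri (Decode C0 z) z w.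
rewrite (dH_sym z w) in H3.
lia.
Qed.
End Dec.


Lemma card_R (R : realType) (I : finType) (A : {set I}) : (#|A|%:R : R) = \sum_i ((i \in A) : nat)%:R.
Proof. by rewrite -sum1_card big_mkcond natr_sum /=; apply: eq_bigr => i _; case: (i \in A). Qed.

Lemma div_eq (R : realType) (a b D : nat) : (0 < D)%N -> ((a%:R / D%:R : R) == b%:R / D%:R) = (a == b).
Proof.
move=> HD; apply/eqP/eqP => [H|->//].
have HD' : (D%:R : R) != 0 by rewrite pnatr_eq0 -lt0n.
have := congr1 (fun z => z * D%:R) H; rewrite !divfK // => /eqP; by rewrite eqr_nat => /eqP.
Qed.

Lemma double_count (I J : finType) (A : {set I}) (r : J -> I -> bool) :
  (\sum_(i in A) #|[set j | r j i]| = \sum_j #|[set i in A | r j i]|)%N.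
Proof.
transitivity (\sum_(i in A) \sum_j (r j i : nat))%N.
  apply: eq_bigr => i _; rewrite -sum1_card big_mkcond /=; apply: eq_bigr => j _.
  by rewrite inE; case: (r j i).
rewrite exchange_big /=; apply: eq_bigr => j _.
rewrite -sum1_card big_mkcond /= [in RHS]big_mkcond /=; apply: eq_bigr => i _.
by rewrite inE; case: (i \in A); case: (r j i).
Qed.

Lemma U_real (R : realType) (de d0 c f u N a : R) : d0 * a + u <= c * f -> a + u = N -> de * c * f <= N -> 0 <= d0 ->
  (de * d0 - 1) * c * f <= (d0 - 1) * u.
Proof. move=> H1 H2 H3 H4. have := ler_wpM2l H4 H3. nra. Qed.


Section Wlem.
Variables (R : realType) (c d0 : nat).

Lemma Wnz_mem (q : R) : q \in Wnz R c d0 ->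
  exists j, [/\ (0 < j)%N, (j <= c * d0)%N & q = j%:R / (c * d0)%:R].
Proof.
rewrite /Wnz /Wset mem_filter => /andP[Hq /mapP [j Hj E]].
exists j; split => //.
- by rewrite lt0n; apply: contraNN Hq => /eqP Hj0; rewrite E Hj0 mul0r.
- by move: Hj; rewrite mem_iota add0n ltnS => /andP[].
Qed.

Lemma Wnz_in j : (0 < j)%N -> (j <= c * d0)%N -> (j%:R / (c * d0)%:R : R) \in Wnz R c d0.
Proof.
move=> Hj Hjd; rewrite /Wnz /Wset mem_filter; apply/andP; split.
  have Hp : (0 < c * d0)%N by apply: leq_trans Hjd.
  by rewrite mulf_neq0 // ?invr_eq0 pnatr_eq0 -lt0n.
by apply/mapP; exists j => //; rewrite mem_iota add0n ltnS Hjd.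
Qed.

Lemma qseqs_mem k qs : qs \in qseqs R c d0 k -> size qs = k /\ (forall q, q \in qs -> q \in Wnz R c d0).
Proof.
elim: k qs => [|k IH] qs /=; first by rewrite inE => /eqP ->.
case/allpairsP => [[q qs'] [/= Hq Hqs ->]].
have [Hs Hall] := IH _ Hqs; split; first by rewrite /= Hs.
by move=> q0; rewrite inE => /orP[/eqP ->|/Hall].
Qed.

Lemma qseqs_cons k q qs : q \in Wnz R c d0 -> qs \in qseqs R c d0 k -> q :: qs \in qseqs R c d0 k.+1.
Proof. by move=> Hq Hqs /=; apply: (allpairs_f (fun a b => a :: b)). Qed.

Lemma qseqs_nil : [::] \in qseqs R c d0 0.
Proof. by rewrite /= inE. Qed.
End Wlem.

Lemma traj_real (R : realType) (de d0 c al N f u f1 : R) :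
  0 < c -> 1 < d0 -> 1 < de * d0 -> 0 <= f ->
  (de * d0 - 1) * c * f <= (d0 - 1) * u ->
  u <= c * (d0 * (de * d0 - 1) * al / ((d0 + 2 * c) * (d0 - 1))) * N ->
  d0 * f1 <= (d0 + 2 * c) * f -> f1 <= al * N.
Proof.
move=> Hc Hd Hdd Hf H1 H2 H3.
have Hd1 : 0 < d0 - 1 by lra.
have Hd2 : 0 < d0 + 2 * c by lra.
have Hk : 0 < (de * d0 - 1) * c by apply: mulr_gt0; lra.
have H4 : (de * d0 - 1) * c * f <= (de * d0 - 1) * c * (d0 * al * N / (d0 + 2 * c)).
  apply: le_trans H1 _; apply: le_trans (ler_wpM2l (ltW Hd1) H2) _.
  rewrite le_eqVlt; apply/orP; left; apply/eqP; field.
  by rewrite !gt_eqF.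
rewrite ler_pM2l // in H4.
have H5 : d0 * f1 <= d0 * (al * N).
  apply: le_trans H3 _; rewrite ler_pdivlMr // in H4.
  by rewrite mulrC; apply: le_trans H4 _; rewrite le_eqVlt; apply/orP; left; apply/eqP; ring.
by rewrite ler_pM2l // in H5; lra.
Qed.

Lemma gammaE (R : realType) (c d0 : nat) (alpha delta : R) : (0 < c)%N -> (1 < d0)%N ->
  gammapar c d0 alpha delta = d0%:R * (delta * d0%:R - 1) * alpha / ((d0%:R + 2 * c%:R) * (d0%:R - 1)).
Proof.
move=> Hc Hd.
have Hc' : 0 < (c%:R : R) by rewrite ltr0n.
have Hd' : 1 < (d0%:R : R) by rewrite ltr1n.
rewrite /gammapar /tpar; field.
rewrite !gt_eqF //; try lra.
Qed.

Lemma eps_real (R : realType) (de C D : R) : 0 < de -> de <= 1 -> 1 <= C -> 2 < D -> 2 < de * D ->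
  0 < (de * D - 2) / (C * D ^+ 2) < 1.
Proof.
move=> H1 H2 H3 H4 H5.
have Hp : 0 < C * D ^+ 2 by apply: mulr_gt0; [lra | apply: exprn_gt0; lra].
apply/andP; split; first by apply: divr_gt0 => //; lra.
rewrite ltr_pdivrMr // mul1r.
have : de * D <= D by rewrite ler_piMl //; lra.
have : D <= C * D ^+ 2 by rewrite expr2; nra.
lra.
Qed.

Lemma gam_real (R : realType) (de C D al : R) : 0 <= C -> 2 < D -> 0 < de -> de <= 1 -> 1 < de * D -> 0 < al ->
  0 <= D * (de * D - 1) * al / ((D + 2 * C) * (D - 1)) <= al.
Proof.
move=> Hc Hd H1 H2 H3 Hal.
have Hp : 0 < (D + 2 * C) * (D - 1) by apply: mulr_gt0; lra.
apply/andP; split.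
  apply: divr_ge0; last exact: ltW.
  apply: mulr_ge0; last exact: ltW.
  by apply: mulr_ge0; lra.
rewrite ler_pdivrMr // [X in _ <= X]mulrC ler_pM2r //.
have : de * D <= D by rewrite ler_piMl //; lra.
nra.
Qed.

Lemma final_real (R : realType) (de D c f' u' us fs f P : R) :
  0 < c -> 2 < D -> 1 < de * D -> 0 <= f -> 0 <= P ->
  (de * D - 1) * c * f' <= (D - 1) * u' -> u' <= us -> us <= c * fs -> fs <= P * f ->
  P <= (de * D - 1) / (2 * (D - 1)) -> 2 * f' <= f.
Proof.
move=> Hc HD Hd Hf HP H1 H2 H3 H4 H5.
have HD1 : 0 < D - 1 by lra.
have Hk : 0 < (de * D - 1) * c by apply: mulr_gt0; lra.
have H6 : P * f <= (de * D - 1) / (2 * (D - 1)) * f by apply: ler_wpM2r.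
have H7 : (de * D - 1) * c * f' <= (de * D - 1) * c * (f / 2).
  apply: le_trans H1 _; apply: le_trans (_ : (D - 1) * (c * ((de * D - 1) / (2 * (D - 1)) * f)) <= _).
    apply: ler_wpM2l; first exact: ltW.
    apply: le_trans H2 _; apply: le_trans H3 _; apply: ler_wpM2l; first exact: ltW.
    exact: le_trans H4 H6.
  rewrite le_eqVlt; apply/orP; left; apply/eqP; field; lra.
rewrite ler_pM2l // in H7; lra.
Qed.

Lemma sum_le_const (T : eqType) (l : seq T) (F : T -> nat) B :
  (forall a, a \in l -> F a <= B)%N -> (\sum_(a <- l) F a <= size l * B)%N.
Proof.
elim: l => [|a l IH] H; first by rewrite big_nil.
rewrite big_cons mulSn leq_add //; first by apply: H; rewrite mem_head.
by apply: IH => b Hb; apply: H; rewrite inE Hb orbT.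
Qed.

Lemma pow_bound (R : realType) (e r : R) : 0 < e < 1 -> 0 < r < 1 ->
  (1 - e) ^+ `|Num.ceil (ln r / ln (1 - e))|%N <= r.
Proof.
move=> /andP[He0 He1] /andP[Hr0 Hr1].
have H1e : 0 < 1 - e < 1 by apply/andP; split; lra.
have Hl1 : ln (1 - e) < 0 by apply: ln_lt0.
have Hlr : ln r < 0 by apply: ln_lt0; apply/andP.
set z := ln r / ln (1 - e).
have Hz : 0 < z by rewrite /z -divrNN; apply: divr_gt0; rewrite oppr_gt0.
have Hc : 0 <= Num.ceil z by rewrite ceil_ge0; lra.
have Hs : z <= (`|Num.ceil z|%N)%:R by rewrite natr_absz ger0_norm // ceil_ge.
have Hp : 0 < 1 - e by lra.
rewrite -ler_ln ?posrE //; last by apply: exprn_gt0.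
rewrite lnXn // -mulr_natr.
have -> : ln r = ln (1 - e) * z by rewrite /z mulrC divfK // (lt_eqF Hl1).
by rewrite ler_nM2l.
Qed.

Lemma r_bounds (R : realType) (X D : R) : 2 < D -> 2 < X -> X <= D -> 0 < (X - 1) / (2 * (D - 1)) < 1.
Proof.
move=> H1 H2 H3; apply/andP; split; first by apply: divr_gt0; lra.
by rewrite ltr_pdivrMr; lra.
Qed.

Lemma cost_arith (C M f s c P : nat) : (1 <= M)%N -> (f <= M)%N -> (C <= s * (1 + 2 * c * P * f))%N ->
  (1 + C <= (1 + s * (1 + 2 * c * P)) * M)%N.
Proof.
move=> H1 H2 H3.
have H4 : (s * (1 + 2 * c * P * f) <= s * (1 + 2 * c * P) * M)%N.
  rewrite -[X in (_ <= X)%N]mulnA leq_mul2l; apply/orP; right.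
  rewrite mulnDl mul1n; apply: leq_add => //.
  by rewrite leq_mul2l H2 orbT.
rewrite mulnDl mul1n; apply: leq_add => //; apply: leq_trans H3 H4.
Qed.

Section Graph.
Variables (R : realType) (c d d0 : nat) (C0 : {set word d}).
Variables (n : nat) (Rt : finType) (nbr : Rt -> d.-tuple 'I_n).
Hypothesis H0 : 0 \in C0.
Hypothesis Hmd : min_distance C0 d0.
Hypothesis d0_gt0 : (0 < d0)%N.
Hypothesis Hreg : regular nbr c.
Variable y : word n.
Hypothesis Hy : y \in Tanner nbr C0.

Lemma y_restr v : restrict nbr y v \in C0.
Proof. by move: Hy; rewrite inE => /forallP. Qed.

Lemma card_nbr_inv i : #|[set v | i \in nbr v]| = c.
Proof. exact: Hreg.2. Qed.

Hypothesis c_gt0 : (0 < c)%N.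
Variables (alpha delta : R).
Hypothesis Hdel : 0 < delta.
Hypothesis Hdel1 : delta <= 1.
Hypothesis Hal : 0 < alpha.
Hypothesis d0_gt2 : (2 < d0)%N.
Hypothesis Hdd0 : 2 < delta * d0%:R.
Hypothesis Hexp : forall T : {set 'I_n}, #|T|%:R <= alpha * n%:R ->
  delta * c%:R * #|T|%:R <= #|Nset nbr T|%:R.

Section X.
Variable x : word n.
Local Notation S := (Fset x y).
Definition ee v := #|[set i in S | i \in nbr v]|.
Local Notation wv := (wv C0 nbr x).
Local Notation kv := (kv C0 nbr x).

Lemma dH_restrict v : dH (restrict nbr x v) (restrict nbr y v) = ee v.
Proof.
rewrite /dH /ee.
have inj : injective (tnth (nbr v)) by apply/tuple_uniqP; exact: Hreg.1 v.
rewrite -(card_imset _ inj); apply: eq_card => i.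
apply/imsetP/idP.
- by case=> k; rewrite !inE !mxE => H ->; rewrite H mem_tnth.
- by rewrite !inE => /andP[Hi /tnthP [k Ek]]; exists k; rewrite // inE !mxE -Ek.
Qed.

Lemma sum_e : (\sum_v ee v = c * #|S|)%N.
Proof.
rewrite /ee -(double_count S (fun v i => i \in nbr v)).
under eq_bigr do rewrite card_nbr_inv.
by rewrite sum_nat_const mulnC.
Qed.

Lemma inN v : (v \in Nset nbr S) = (0 < ee v)%N.
Proof.
rewrite inE; apply/existsP/card_gt0P.
- by case=> i /andP[H1 H2]; exists i; rewrite inE H1.
- by case=> i; rewrite inE => H; exists i.
Qed.

Lemma card_N : (#|Nset nbr S| <= c * #|S|)%N.
Proof.
rewrite -sum1_card -sum_e [X in (X <= _)%N]big_mkcond /=; apply: leq_sum => v _.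
by rewrite inN; case: ifP.
Qed.

Lemma restr_eq v : ee v = 0%N -> restrict nbr x v = restrict nbr y v.
Proof. by move=> H; apply: dH0_eq; rewrite dH_restrict. Qed.

Lemma wv_good v : (2 * ee v < d0)%N -> wv v = restrict nbr y v.
Proof.
move=> H; apply: (Decode_uniq H0 Hmd (y_restr v)).
by rewrite dH_sym dH_restrict.
Qed.

Lemma kv_good v : (2 * ee v < d0)%N -> kv v = ee v.
Proof. by move=> H; rewrite /kv (wv_good H) dH_sym dH_restrict. Qed.

Lemma wv_bad v : wv v != restrict nbr y v -> (d0 <= kv v + ee v)%N.
Proof.
move=> H; have := Hmd.2 _ _ (Decode_in H0 _) (y_restr v) H.
move/leq_trans; apply; rewrite /kv -dH_restrict; exact: dH_tri.
Qed.

Lemma U_sub_N : Uset nbr C0 x \subset Nset nbr S.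
Proof.
apply/subsetP => v; rewrite inE inN lt0n; apply: contraNN => /eqP/restr_eq ->.
exact: y_restr.
Qed.


Local Notation active := (active R d0 C0 nbr x).
Local Notation fd := (firstdiff C0 nbr x).

Lemma activeE v : active v = (0 < kv v)%N && (2 * kv v < d0)%N.
Proof. by rewrite /active /tpar ltr_pdivlMr // -natrM ltr_nat mulnC. Qed.

Lemma fd_uniq v i j : fd v i -> fd v j -> i = j.
Proof.
move=> /andP[Hi /forall_inP Hmi] /andP[Hj /forall_inP Hmj].
by apply/val_inj/eqP; rewrite eqn_leq Hmi // Hmj.
Qed.

Lemma fd_exists v : active v -> exists i, fd v i.
Proof.
rewrite activeE => /andP[Hk _].
move: Hk; rewrite /kv /dH => /card_gt0P [k Hk].
have Hi1 : tnth (nbr v) k \in diffN C0 nbr x v by apply/imsetP; exists k.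
case: (@arg_minnP _ _ (mem (diffN C0 nbr x v)) (fun i : 'I_n => val i) Hi1) => i Hi Hm.
exists i; apply/andP; split; first exact: Hi.
by apply/forall_inP => j /Hm.
Qed.

Lemma fd_nbr v i : fd v i -> i \in nbr v.
Proof. by case/andP => /imsetP [k _ ->] _; apply: mem_tnth. Qed.

Lemma fd_good v i : wv v = restrict nbr y v -> fd v i -> i \in S.
Proof.
move=> E /andP[/imsetP [k Hk ->] _]; move: Hk; rewrite inE E !mxE => H.
by rewrite inE eq_sym.
Qed.

Definition num i := (\sum_(v | active v && fd v i) (d0 - 2 * kv v))%N.

Lemma pvalE i : pval R c d0 C0 nbr x i = (num i)%:R / (c * d0)%:R.
Proof.
rewrite /pval /num natr_sum mulr_suml; apply: eq_bigr => v /andP[].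
rewrite activeE => /andP[_ Hk] _.
rewrite natrB; last by apply: ltnW.
rewrite /tpar natrM natrM; field.
by apply/andP; split; rewrite pnatr_eq0 -lt0n.
Qed.

Lemma num_le i : (num i <= c * d0)%N.
Proof.
rewrite /num; apply: (@leq_trans (\sum_(v | i \in nbr v) d0)%N).
  rewrite big_mkcond [X in (_ <= X)%N]big_mkcond /=; apply: leq_sum => v _.
  case: ifP => [/andP[_ /fd_nbr ->]|_]; last by [].
  exact: leq_subr.
by rewrite sum_nat_const -(card_nbr_inv i) cardsE.
Qed.

Lemma active_N v : active v -> (0 < ee v)%N.
Proof.
rewrite activeE => Ha; rewrite lt0n; apply/negP => /eqP H0e; move: Ha.
have Hk : kv v = ee v by apply: kv_good; rewrite H0e muln0.
by rewrite Hk H0e.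
Qed.

Lemma inactive_N v : (0 < ee v)%N -> ~~ active v -> (d0 <= 2 * ee v)%N.
Proof.
move=> He; rewrite activeE; apply: contraNT; rewrite -ltnNge => Hlt.
by rewrite (kv_good Hlt) He Hlt.
Qed.

Lemma bad_fd v i : active v -> fd v i -> i \notin S -> (d0 < 2 * ee v)%N.
Proof.
move=> Ha Hf HS.
have Hne : wv v != restrict nbr y v by apply/eqP => E; move: HS; rewrite (fd_good E Hf).
have := wv_bad Hne; move: Ha; rewrite activeE => /andP[_ Hk]; lia.
Qed.

Lemma card_fd_le1 (A : {set 'I_n}) v :
  (#|[set i in A | active v && fd v i]| <= (active v && [exists i in A, fd v i]))%N.
Proof.
case: (boolP (active v && [exists i in A, fd v i])) => H.
  apply/card_le1_eqP => i j; rewrite !inE => /and3P[_ _ Hi] /and3P[_ _ Hj].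
  by move: (fd_uniq Hi Hj) => ->.
rewrite leqn0 cards_eq0; apply/eqP/setP => i; rewrite !inE.
apply/negP => /and3P[Hi Ha Hf]; move/negP: H; apply; rewrite Ha /=.
by apply/exists_inP; exists i.
Qed.

Lemma count_flip (A : {set 'I_n}) j : (0 < j)%N ->
  (#|[set i in A | num i == j]| <= #|[set v | active v && [exists i in A, fd v i]]|)%N.
Proof.
move=> Hj.
apply: (@leq_trans (\sum_(i in A) #|[set v | active v && fd v i]|)%N).
  rewrite -sum1_card big_mkcond [X in (_ <= X)%N]big_mkcond /=; apply: leq_sum => i _.
  rewrite inE; case: (i \in A) => //=; case: eqP => // Hn.
  case: (pickP (fun v => active v && fd v i)) => [v Hv|Hno].
    by apply/card_gt0P; exists v; rewrite inE.
  by move: Hj; rewrite -Hn /num big_pred0.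
rewrite (double_count A (fun v i => active v && fd v i)).
rewrite -sum1_card [X in (_ <= X)%N]big_mkcond /=; apply: leq_sum => v _.
by rewrite inE; apply: card_fd_le1.
Qed.

Lemma count_flip_all j : (0 < j)%N -> (#|[set i | num i == j]| <= c * #|S|)%N.
Proof.
move=> Hj; apply: leq_trans (card_N) .
have := count_flip [set: 'I_n] Hj.
have -> : [set i in [set: 'I_n] | num i == j] = [set i | num i == j].
  by apply/setP => i; rewrite !inE.
move/leq_trans; apply; apply: subset_leq_card; apply/subsetP => v.
by rewrite inE inN => /andP[/active_N].
Qed.

Lemma count_flip_bad j : (0 < j)%N -> (d0 * #|[set i in ~: S | num i == j]| <= 2 * (c * #|S|))%N.
Proof.
move=> Hj.
apply: (@leq_trans (d0 * #|[set v | d0 < 2 * ee v]|)%N).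
  rewrite leq_mul2l; apply/orP; right.
  apply: leq_trans (count_flip _ Hj) _; apply: subset_leq_card; apply/subsetP => v.
  rewrite !inE => /andP[Ha /exists_inP [i Hi Hf]]; apply: bad_fd Ha Hf _.
  by move: Hi; rewrite inE.
rewrite -sum_e big_distrr /= -sum1_card big_distrr /=.
apply: (@leq_trans (\sum_(v in [set v | (d0 < 2 * ee v)%N]) 2 * ee v)%N).
  by apply: leq_sum => v; rewrite inE muln1 => /ltnW.
rewrite [X in (_ <= X)%N](bigID (fun v => v \in [set v | (d0 < 2 * ee v)%N])) /=.
apply: leq_addr.
Qed.

Definition sg (i : 'I_n) : R := if i \in S then 1 else -1.
Definition Delta : R := \sum_i sg i * (num i)%:R.
Definition G (j : nat) : R := \sum_i sg i * (num i == j)%:R.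

Lemma per_v v : (d0%:R * (0 < ee v)%N%:R - 2 * (ee v)%:R : R) <=
   \sum_(i | active v && fd v i) sg i * (d0 - 2 * kv v)%N%:R.
Proof.
case: (boolP (active v)) => Ha.
  have [i0 Hi0] := fd_exists Ha.
  rewrite (big_pred1 i0); last first.
    by move=> i /=; apply/idP/eqP => [H|->//]; apply: fd_uniq H Hi0.
  have He := active_N Ha.
 rewrite He mulr1.
  move: Ha; rewrite activeE => /andP[Hk0 Hk].
  rewrite natrB; last by apply: ltnW.
  have Hk' : (2 * (kv v)%:R < d0%:R :> R) by rewrite -natrM ltr_nat.
  case: (eqVneq (wv v) (restrict nbr y v)) => E.
    have Hke : kv v = ee v by rewrite /kv E dH_sym dH_restrict.
    by rewrite /sg (fd_good E Hi0) mul1r Hke natrM.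
  have Hb := wv_bad E.
  have Hb' : (d0%:R <= (kv v)%:R + (ee v)%:R :> R) by rewrite -natrD ler_nat.
  rewrite /sg natrM; case: ifP => _; lra.
rewrite big_pred0 //.
case: (posnP (ee v)) => He.
  by rewrite He /= mulr0 mulr0 subr0.
have Hi := inactive_N He Ha.
have Hi' : (d0%:R <= 2 * (ee v)%:R :> R) by rewrite -natrM ler_nat.
rewrite mulr1; lra.
Qed.

Lemma cardN_sum : (\sum_v ((0 < ee v)%N : nat) = #|Nset nbr S|)%N.
Proof.
rewrite -sum1_card [in RHS]big_mkcond /=; apply: eq_bigr => v _.
by rewrite inN; case: (0 < ee v)%N.
Qed.

Lemma Delta_ge : d0%:R * (#|Nset nbr S|)%:R - 2 * (c * #|S|)%:R <= Delta.
Proof.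
rewrite /Delta.
under eq_bigr do rewrite /num natr_sum mulr_sumr big_mkcond /=.
rewrite exchange_big /=.
under [X in _ <= X]eq_bigr do rewrite -big_mkcond /=.
apply: le_trans (ler_sum _ (fun v _ => per_v v)).
rewrite sumrB -!mulr_sumr -!natr_sum sum_e cardN_sum.
by [].
Qed.

Lemma Delta_G : \sum_(j < (c * d0).+1) (j : nat)%:R * G j = Delta.
Proof.
rewrite /G /Delta; under eq_bigr do rewrite mulr_sumr.
rewrite exchange_big /=; apply: eq_bigr => i _.
have Hl : (num i < (c * d0).+1)%N by rewrite ltnS num_le.
rewrite (bigD1 (Ordinal Hl)) //= eqxx mulr1 big1 ?addr0; first by rewrite mulrC.
move=> j Hj; have -> : (num i == j) = false.
  apply/eqP => E; move/eqP: Hj; apply; apply/val_inj; by rewrite /= E.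
by rewrite mulr0 mulr0.
Qed.

Local Notation flip j := (DeterFlip c d0 C0 nbr x ((j%:R : R) / (c * d0)%:R)).

Lemma flip_entry j i : (0 < c * d0)%N ->
  flip j 0 i = if num i == j then x 0 i + 1 else x 0 i.
Proof. by move=> Hp; rewrite /DeterFlip mxE pvalE div_eq. Qed.

Lemma flip_Fxx j : (0 < c * d0)%N -> Fset x (flip j) = [set i | num i == j].
Proof.
move=> Hp; apply/setP => i; rewrite !inE flip_entry //.
case: (num i == j); last by rewrite eqxx.
by rewrite eq_sym F2flip eqxx.
Qed.

Lemma flip_F j : (0 < c * d0)%N -> Fset (flip j) y = [set i | (i \in S) != (num i == j)].
Proof.
move=> Hp; apply/setP => i; rewrite !inE flip_entry //.
case: (num i == j); rewrite ?F2flip; by case: (x 0 i == y 0 i).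
Qed.

Lemma flip_card j : (0 < c * d0)%N -> (#|Fset (flip j) y|%:R : R) = #|S|%:R - G j.
Proof.
move=> Hp; rewrite flip_F // !card_R /G -sumrB; apply: eq_bigr => i _.
rewrite /sg !inE; case: (x 0 i != y 0 i); case: (num i == j); rewrite /= ?mulr1n ?mulr0n; lra.
Qed.

Lemma flip_card_le j : (0 < c * d0)%N ->
  (#|Fset (flip j) y| <= #|S| + #|[set i in ~: S | num i == j]|)%N.
Proof.
move=> Hp; rewrite flip_F //; apply: leq_trans (leq_card_setU _ _).
apply: subset_leq_card; apply/subsetP => i; rewrite !inE.
by case: (x 0 i != y 0 i); case: (num i == j).
Qed.

Lemma sum_j_le D : (\sum_(j < D.+1) (j : nat) <= D * D)%N.
Proof.
elim: D => [|D IH]; first by rewrite big_ord1.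
rewrite big_ord_recr /=; move: IH; move: (\sum_(i < D.+1) _)%N => s; nia.
Qed.

Lemma epsparE : epspar c d0 delta = (delta * d0%:R - 2) / (c%:R * d0%:R ^+ 2).
Proof.
rewrite /epspar /eps0 /tpar; field.
by rewrite (gt_eqF Hdel) !pnatr_eq0 -!lt0n c_gt0 d0_gt0.
Qed.

Lemma good_step : #|S|%:R <= alpha * n%:R ->
  exists j, [/\ (0 < j)%N, (j <= c * d0)%N &
     #|Fset (flip j) y|%:R <= (1 - epspar c d0 delta) * #|S|%:R].
Proof.
move=> Hf.
have HD : (0 < c * d0)%N by rewrite muln_gt0 c_gt0 d0_gt0.
have H1 : (1 < (c * d0).+1)%N by rewrite ltnS.
case: (@arg_maxP _ _ _ (Ordinal H1) (fun i : 'I_(c * d0).+1 => (0 < i)%N) (fun i => G (val i)) isT) => js Hjs Hm.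
exists js; split => //; first by rewrite -ltnS ltn_ord.
set M : R := (\sum_(j < (c * d0).+1) (j : nat))%:R.
have HMG : Delta <= M * G js.
  rewrite -Delta_G /M natr_sum mulr_suml; apply: ler_sum => j _.
  case: (posnP (j : nat)) => Hj; first by rewrite Hj !mul0r.
  by rewrite ler_wpM2l //; exact: Hm.
have HM0 : 0 < M.
  rewrite /M ltr0n (bigD1 (Ordinal H1)) //=.
have HMD : M <= ((c * d0)%:R) ^+ 2 by rewrite /M -natrX ler_nat expnS expn1 sum_j_le.
have HN := Hexp Hf.
have HDel := Delta_ge.
set f : R := #|S|%:R.
have Hf0 : 0 <= f by rewrite /f ler0n.
have Hc0 : 0 < (c%:R : R) by rewrite ltr0n.
have Hd0 : 0 < (d0%:R : R) by rewrite ltr0n.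
set A := (delta * d0%:R - 2) * c%:R * f.
have A0 : 0 <= A.
  rewrite /A; apply: mulr_ge0; last exact: Hf0.
  apply: mulr_ge0; [by rewrite subr_ge0 ltW | exact: ltW].
have HA : A <= Delta.
  apply: le_trans HDel; rewrite /A natrM.
  have := ler_wpM2l (ltW Hd0) HN; rewrite -/f => H.
  have -> : (delta * d0%:R - 2) * c%:R * f = d0%:R * (delta * c%:R * f) - 2 * (c%:R * f) by ring.
  by rewrite lerD2r.
have HG0 : 0 <= G js by rewrite -(pmulr_rge0 _ HM0); apply: le_trans HMG; apply: le_trans HA.
have HGD : A <= ((c * d0)%:R) ^+ 2 * G js.
  by apply: le_trans HA _; apply: le_trans HMG _; apply: ler_wpM2r.
rewrite flip_card // -/f epsparE.
have HD2 : 0 < ((c * d0)%:R : R) ^+ 2 by rewrite exprn_gt0 // ltr0n.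
have -> : (1 - (delta * d0%:R - 2) / (c%:R * d0%:R ^+ 2)) * f = f - A / ((c * d0)%:R) ^+ 2.
  rewrite /A natrM; field; by rewrite (gt_eqF Hc0) (gt_eqF Hd0).
rewrite lerD2l lerN2 ler_pdivrMr // mulrC //.
Qed.

Lemma U_nat : (d0 * #|Nset nbr S :\: Uset nbr C0 x| + #|Uset nbr C0 x| <= c * #|S|)%N.
Proof.
rewrite -sum_e -sum1_card -[#|Uset _ _ _|]sum1_card big_distrr /=.
rewrite [X in (X + _)%N]big_mkcond [X in (_ + X)%N]big_mkcond -big_split /=.
apply: leq_sum => v _; rewrite muln1.
case: (boolP (v \in Uset nbr C0 x)) => HU.
  have := subsetP U_sub_N v HU; rewrite inN => He.
  by rewrite inE HU /= add0n.
rewrite inE (negbTE HU) /= addn0; case: ifP => // HN.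
rewrite -dH_restrict; apply: Hmd.2; [by move: HU; rewrite inE negbK | exact: y_restr |].
by apply/eqP => E; move: HN; rewrite inN -dH_restrict E dH0.
Qed.

Lemma U_bound : #|S|%:R <= alpha * n%:R ->
  (delta * d0%:R - 1) * c%:R * #|S|%:R <= (d0%:R - 1) * #|Uset nbr C0 x|%:R.
Proof.
move=> Hf.
have H1 : (d0%:R * #|Nset nbr S :\: Uset nbr C0 x|%:R + #|Uset nbr C0 x|%:R <= c%:R * #|S|%:R :> R).
  by rewrite -natrM -natrM -natrD ler_nat U_nat.
have H2 : (#|Nset nbr S :\: Uset nbr C0 x|%:R + #|Uset nbr C0 x|%:R = #|Nset nbr S|%:R :> R).
  rewrite -natrD; congr (_%:R); rewrite addnC -(cardsID (Uset nbr C0 x) (Nset nbr S)).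
  by congr (#|_| + _)%N; rewrite (setIidPr U_sub_N).
apply: U_real H1 H2 (Hexp Hf) _; exact: ler0n.
Qed.

Lemma step_bound j : (0 < j)%N ->
  (d0 * #|Fset (flip j) y| <= (d0 + 2 * c) * #|S|)%N.
Proof.
move=> Hj; have Hp : (0 < c * d0)%N by rewrite muln_gt0 c_gt0 d0_gt0.
have H1 := flip_card_le j Hp; have H2 := count_flip_bad Hj.
apply: (@leq_trans (d0 * (#|S| + #|[set i in ~: S | num i == j]|))%N); first by rewrite leq_mul2l H1 orbT.
rewrite mulnDr mulnDl; rewrite leq_add2l; apply: leq_trans H2 _; by rewrite mulnA.
Qed.

Lemma cost_bounds j : (0 < j)%N ->
  [/\ (#|Fset x (flip j)| <= c * #|S|)%N, (#|Uset nbr C0 x| <= c * #|S|)%N &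
      (#|Fset (flip j) y| <= (1 + c) * #|S|)%N].
Proof.
move=> Hj; have Hp : (0 < c * d0)%N by rewrite muln_gt0 c_gt0 d0_gt0.
split.
- by rewrite flip_Fxx //; apply: count_flip_all.
- by apply: leq_trans (card_N); apply: subset_leq_card; exact: U_sub_N.
apply: leq_trans (flip_card_le j Hp) _; rewrite mulSn leq_add2l.
apply: leq_trans (count_flip_all Hj); apply: subset_leq_card; apply/subsetP => i.
by rewrite !inE => /andP[].
Qed.
End X.

Local Notation F z := #|Fset z y|.
Local Notation U z := #|Uset nbr C0 z|.
Local Notation gam := (gammapar c d0 alpha delta).
Local Notation run := (runseq c d0 alpha delta C0 nbr).
Local Notation eps := (epspar c d0 delta).

Lemma d0_gt1 : (1 < d0)%N. Proof. exact: ltnW. Qed.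

Lemma U_le z : (U z <= c * F z)%N.
Proof. by have [] := cost_bounds z (isT : (0 < 1)%N). Qed.

Lemma run_inv qs z z' : (forall q, q \in qs -> q \in Wnz R c d0) ->
  (F z)%:R <= alpha * n%:R -> (U z)%:R <= c%:R * gam * n%:R -> run z qs = Some z' ->
  (F z')%:R <= alpha * n%:R /\ (U z')%:R <= c%:R * gam * n%:R.
Proof.
elim: qs z => [|q qs IH] z Hq Hf Hu /=; first by case=> <-.
case: ifPn => // Hab Hr.
have [j [Hj Hjd Eq]] := Wnz_mem (Hq q (mem_head _ _)).
rewrite -leNgt in Hab.
apply: IH Hr => //; first by move=> q0 Hq0; apply: Hq; rewrite inE Hq0 orbT.
rewrite Eq.
have Hc : 0 < (c%:R : R) by rewrite ltr0n.
have Hd : 1 < (d0%:R : R) by rewrite ltr1n d0_gt1.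
apply: (traj_real Hc Hd _ (ler0n _ _) (U_bound Hf)).
- apply: lt_trans Hdd0; lra.
- by rewrite -(gammaE _ _ c_gt0 d0_gt1).
- have := step_bound z Hj; rewrite -(ler_nat R) !natrM natrD natrM => H; exact: H.
Qed.

Lemma eps_bounds : 0 < eps < 1.
Proof.
have H1 : 1 <= (c%:R : R) by rewrite ler1n.
have H2 : 2 < (d0%:R : R) by rewrite ltr_nat.
by rewrite epsparE; apply: eps_real.
Qed.

Lemma gam_le : 0 <= gam <= alpha.
Proof.
have H1 : 1 < delta * d0%:R by apply: lt_trans Hdd0; rewrite ltr1n.
have H2 : 2 < (d0%:R : R) by rewrite ltr_nat.
by rewrite (gammaE _ _ c_gt0 d0_gt1); apply: gam_real => //; rewrite ler0n.
Qed.

Lemma good_traj k z : (F z)%:R <= gam * n%:R ->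
  exists qs z', [/\ qs \in qseqs R c d0 k, run z qs = Some z' &
    (F z')%:R <= (1 - eps) ^+ k * (F z)%:R].
Proof.
have [Hg0 Hga] := andP gam_le.
have [He0 He1] := andP eps_bounds.
elim: k z => [|k IH] z Hz.
  by exists [::], z; rewrite expr0 mul1r; split => //; exact: qseqs_nil.
have Hfa : (F z)%:R <= alpha * n%:R by apply: le_trans Hz _; apply: ler_wpM2r.
have [j [Hj Hjd H1]] := good_step (x:=z) Hfa.
set z1 := DeterFlip c d0 C0 nbr z (j%:R / (c * d0)%:R) in H1.
have Hz1 : (F z1)%:R <= (F z)%:R :> R.
  apply: le_trans H1 _; rewrite ler_piMl //; lra.
have [qs [z' [Hqs Hr Hb]]] := IH z1 (le_trans Hz1 Hz).
exists (j%:R / (c * d0)%:R :: qs), z'; split.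
- by apply: qseqs_cons => //; apply: Wnz_in.
- rewrite /= -/z1 ltNge.
  have -> : (U z1)%:R <= c%:R * gam * n%:R.
    apply: le_trans (_ : c%:R * (F z)%:R <= _).
      by apply: le_trans (_ : c%:R * (F z1)%:R <= _); [rewrite -natrM ler_nat U_le | apply: ler_wpM2l].
    by rewrite -mulrA; apply: ler_wpM2l.
  by [].
- apply: le_trans Hb _; rewrite exprSr -mulrA; apply: ler_wpM2l; first by apply: exprn_ge0; lra.
  exact: H1.
Qed.

Local Notation step x := (DeepFlip_step c d0 alpha delta C0 nbr x).

Lemma fold_inv x (Q : seq R -> Prop) (l : seq (seq R)) (st : nat * option (word n)) :
  (forall qs, qs \in l -> Q qs) ->
  (st.2 = None -> st.1 = #|Rt|.+1) ->
  (forall z, st.2 = Some z -> st.1 = U z /\ exists2 qs, Q qs & run x qs = Some z) ->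
  [/\ (foldl (step x) st l).2 = None -> (foldl (step x) st l).1 = #|Rt|.+1,
      (forall z, (foldl (step x) st l).2 = Some z -> (foldl (step x) st l).1 = U z /\ exists2 qs, Q qs & run x qs = Some z),
      ((foldl (step x) st l).1 <= st.1)%N &
      (forall qs z, qs \in l -> run x qs = Some z -> ((foldl (step x) st l).1 <= U z)%N)].
Proof.
elim: l st => [|qs l IH] st HQ Hn Hs /=; first by split.
have HQq : Q qs by apply: HQ; rewrite inE eqxx.
have [H1 H2 H3 H4] : [/\ (step x st qs).2 = None -> (step x st qs).1 = #|Rt|.+1,
   (forall z, (step x st qs).2 = Some z -> (step x st qs).1 = U z /\ exists2 qs, Q qs & run x qs = Some z),
   ((step x st qs).1 <= st.1)%N &
   (forall z, run x qs = Some z -> ((step x st qs).1 <= U z)%N)].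
  rewrite /DeepFlip_step; case E: (run x qs) => [z|] /=; last by split.
  case: ifP => Hlt /=.
    split => //; last by move=> z0 [<-].
      by move=> z0 [<-]; split => //; exists qs.
    exact: ltnW.
  by split => // z0 [<-]; rewrite leqNgt Hlt.
have HQ' : forall qs0, qs0 \in l -> Q qs0 by move=> qs0 H; apply: HQ; rewrite inE H orbT.
have [R1 R2 R3 R4] := IH (step x st qs) HQ' H1 H2.
split => //; first exact: leq_trans R3 H3.
move=> qs0 z; rewrite inE => /orP[/eqP -> Hr|Hin Hr]; first exact: leq_trans R3 (H4 _ Hr).
exact: R4 Hin Hr.
Qed.

Lemma cost_run x qs : (forall q, q \in qs -> q \in Wnz R c d0) ->
  (cost_runseq c d0 alpha delta C0 nbr x qs <= size qs * (1 + 2 * c * (1 + c) ^ size qs * F x))%N.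
Proof.
elim: qs x => [|q qs IH] x Hq //=.
have [j [Hj Hjd Eq]] := Wnz_mem (Hq q (mem_head _ _)).
have [B1 B2 B3] := cost_bounds x Hj.
rewrite -Eq in B1 B3.
set x1 := DeterFlip c d0 C0 nbr x q in B1 B3 *.
have IH1 := IH x1 (fun q0 H => Hq q0 (introT orP (or_intror H))).
apply: (@leq_trans (cost_DeterFlip c d0 C0 nbr x q + cost_runseq c d0 alpha delta C0 nbr x1 qs)).
  by rewrite leq_add2l; case: ifP.
rewrite /cost_DeterFlip -/x1.
have HP0 : (0 < (1 + c) ^ size qs)%N by rewrite expn_gt0.
move: IH1 B1 B2 B3 HP0; rewrite expnS.
move: (cost_runseq _ _ _ _ _ _ _ _) (size qs) ((1 + c) ^ size qs)%N (F x) (F x1) (U x) #|Fset x x1| => C m P f f1 u g.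
move=> H1 H2 H3 H4 HP.
set Y := (2 * c * ((1 + c) * P) * f)%N.
have H5 : (2 * c * P * f1 <= Y)%N.
  rewrite /Y; have -> : (2 * c * ((1 + c) * P) * f = 2 * c * P * ((1 + c) * f))%N by ring.
  by rewrite leq_mul2l H4 orbT.
have H6 : (C <= m * (1 + Y))%N by apply: leq_trans H1 _; rewrite leq_mul2l leq_add2l H5 orbT.
have H7 : (2 * (c * f) <= Y)%N.
  rewrite /Y; have -> : (2 * c * ((1 + c) * P) * f = 2 * (c * f) * ((1 + c) * P))%N by ring.
  by rewrite leq_pmulr // muln_gt0.
rewrite mulSn; lia.
Qed.

Definition Kconst := (size (qseqs R c d0 (spar c d0 delta)) *
   (1 + spar c d0 delta * (1 + 2 * c * (1 + c) ^ spar c d0 delta)))%N.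

Lemma main_graph (ord : seq (seq R)) x :
  perm_eq ord (qseqs R c d0 (spar c d0 delta)) ->
  (F x)%:R <= gam * n%:R ->
  exists x', [/\ DeepFlip c d0 alpha delta C0 nbr ord x = Some x',
     (2 * F x' <= F x)%N &
     (cost_DeepFlip c d0 alpha delta C0 nbr ord x <= Kconst * maxn 1 (F x))%N].
Proof.
move=> Hperm Hx.
set s := spar c d0 delta.
have HQ : forall qs, qs \in ord -> size qs = s /\ (forall q, q \in qs -> q \in Wnz R c d0).
  by move=> qs; rewrite (perm_mem Hperm) => /qseqs_mem.
have [Hg0 Hga] := andP gam_le.
have Hfa : (F x)%:R <= alpha * n%:R by apply: le_trans Hx _; apply: ler_wpM2r.
have Hua : (U x)%:R <= c%:R * gam * n%:R.
  apply: le_trans (_ : c%:R * (F x)%:R <= _); first by rewrite -natrM ler_nat U_le.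
  by rewrite -mulrA; apply: ler_wpM2l.
have [qs [xs [Hqs Hrs Hbs]]] := good_traj s Hx.
have Hqs' : qs \in ord by rewrite (perm_mem Hperm).
have [R1 R2 R3 R4] := @fold_inv x (fun qs => forall q, q \in qs -> q \in Wnz R c d0) ord (#|Rt|.+1, None)
  (fun qs H => (HQ qs H).2) (fun _ => erefl) (fun z (H : None = Some z) => ltac:(discriminate H)).
move: R1 R2 R3 R4.
set res := foldl (DeepFlip_step c d0 alpha delta C0 nbr x) (#|Rt|.+1, None) ord => R1 R2 R3 R4.
have Hres : (res.1 <= #|Rt|)%N.
  apply: leq_trans (R4 _ _ Hqs' Hrs) _; exact: max_card.
case E: res.2 => [x'|]; last by move: (R1 E) Hres => ->; rewrite ltnn.
have [Hu' [qs' Hq' Hr']] := R2 _ E.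
exists x'; split.
- by rewrite /DeepFlip -/res E.
- have [Hf' _] := run_inv Hq' Hfa Hua Hr'.
  have HU' := U_bound Hf'.
  have Hux : (U x' <= U xs)%N by rewrite -Hu'; exact: R4 _ _ Hqs' Hrs.
  have He := eps_bounds.
  have Hr : 0 < (delta * d0%:R - 1) / (2 * (d0%:R - 1)) < 1.
    have Hd : 2 < (d0%:R : R) by rewrite ltr_nat.
    have Hdd : delta * d0%:R <= d0%:R by rewrite ler_piMl // ler0n.
    exact: r_bounds.
  have Hpow : (1 - eps) ^+ s <= (delta * d0%:R - 1) / (2 * (d0%:R - 1)).
    rewrite /s /spar; exact: (pow_bound He Hr).
  rewrite -(ler_nat R) natrM.
  apply: (@final_real R delta d0%:R c%:R _ (U x')%:R (U xs)%:R (F xs)%:R _ ((1 - eps) ^+ s)) => //.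
  + by rewrite ltr0n.
  + by rewrite ltr_nat.
  + by apply: lt_trans Hdd0; rewrite ltr1n.
  + by apply: exprn_ge0; case/andP: He => _ H; rewrite subr_ge0 ltW.
  + by rewrite ler_nat.
  + by rewrite -natrM ler_nat U_le.
rewrite /cost_DeepFlip /Kconst -(perm_size Hperm) -mulnA.
apply: sum_le_const => qs0 Hin.
have [Hs Hw] := HQ _ Hin.
have := cost_run x Hw; rewrite Hs.
have H1 : (1 <= maxn 1 (F x))%N by rewrite leq_maxl.
have H2 : (F x <= maxn 1 (F x))%N by rewrite leq_maxr.
exact: cost_arith.
Qed.
End Graph.

Unset Implicit Arguments.
Set Strict Implicit.
Theorem theorem4p6 (R : realType) (c d d0 : nat) (alpha delta : R)
    (C0 : {set 'rV['F_2]_d}) :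
  (0 < c)%N -> (0 < d)%N ->
  0 < alpha <= 1 -> 0 < delta <= 1 ->
  linear_code C0 -> min_distance C0 d0 ->
  2 < delta * d0%:R ->
  exists K : nat,
  forall (n : nat) (Rt : finType) (nbr : Rt -> d.-tuple 'I_n),
    expander nbr c alpha delta ->
  forall ord : seq (seq R),
    perm_eq ord (qseqs R c d0 (spar c d0 delta)) ->
  forall x y : 'rV['F_2]_n,
    y \in Tanner nbr C0 ->
    (dH x y)%:R <= gammapar c d0 alpha delta * n%:R ->
    exists x' : 'rV['F_2]_n,
      [/\ DeepFlip c d0 alpha delta C0 nbr ord x = Some x',
          (2 * #|Fset x' y| <= #|Fset x y|)%N &
          (cost_DeepFlip c d0 alpha delta C0 nbr ord x <= K * maxn 1 #|Fset x y|)%N].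
Proof.
move=> Hc Hd /andP[Hal Hal1] /andP[Hdel Hdel1] Hlin Hmd Hdd0.
have Hd0 : (2 < d0)%N.
  have : 2 < (d0%:R : R) by apply: lt_le_trans Hdd0 _; rewrite ler_piMl // ler0n.
  by rewrite ltr_nat.
exists (Kconst c d0 delta).
move=> n Rt nbr [Hreg Hexp] ord Hperm x y Hy Hdist.
exact: (main_graph Hlin.1 Hmd (ltnW (ltnW Hd0)) Hreg Hy Hc Hdel Hdel1 Hal Hd0 Hdd0 Hexp Hperm Hdist).
Qed.
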